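(* Let $n,i,j$ be positive integers with $i+2\le j\le n-1$, and let $\lambda=i\,n\,(j-1)\,j$ and $\mu=(j-1)\,j\,n\,i$ (words of length $4$). For $\pi\in X_n(\lambda)$ with $\lambda$-decomposition $(\alpha,\lambda,\gamma,\delta)$, the permutation $\gamma'\mu\alpha'\delta$ lies in $X_n(\mu)$ and its $\mu$-decomposition is $(\gamma',\mu,\alpha',\delta)$. The map $X_n(\lambda)\to X_n(\mu)$ given by $(\alpha,\lambda,\gamma,\delta)\mapsto(\gamma',\mu,\alpha',\delta)$ (i.e. $\pi\mapsto\gamma'\mu\alpha'\delta$) is a bijection, whose inverse is the map sending $\sigma\in X_n(\mu)$ with $\mu$-decomposition $(\alpha,\mu,\gamma,\delta)$ to $(\gamma',\lambda,\alpha',\delta)$, i.e. to $\gamma'\lambda\alpha'\delta$.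
   Context: For a word $w=w_1\cdots w_k$ of pairwise distinct positive integers, an ascent is an index $t$ with $w_t<w_{t+1}$, a descent one with $w_t>w_{t+1}$, and the height is $h(w)=(\#\text{ascents})-(\#\text{descents})$ ($h(w)=0$ if $k\le1$). The word is ballot if every prefix has nonnegative height. $\mathcal{B}$ denotes the set of all finite ballot words of pairwise distinct positive integers (including the empty word). A ballot permutation of $[n]$ is a permutation $\pi_1\cdots\pi_n$ in one-line notation that is a ballot word. For a word $w$, $w_{-1}$ is its last letter and $w'=w_k\cdots w_1$ its reversal. Juxtaposition denotes concatenation. For a nonempty $\omega\in\mathcal{B}$, $X_n(\omega)$ is the set of ballot permutations $\pi$ of $[n]$ that can be written as $\pi=\alpha\omega\gamma\delta$ (with $\alpha,\gamma,\delta$ possibly empty) such that $h(\alpha\omega\gamma)=h(\omega)$. For $\pi\in X_n(\omega)$, its $\omega$-decomposition is the (unique) 4-tuple $(\alpha,\omega,\gamma,\delta)$ with $\pi=\alpha\omega\gamma\delta$, $h(\alpha\omega\gamma)=h(\omega)$ and $\gamma'\omega_{-1}\in\mathcal{B}$, where $\gamma$ is of maximal length among all words with these properties. *)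

(* Defs.v *)
From mathcomp Require Import all_boot all_order all_algebra.
Set Implicit Arguments. Unset Strict Implicit. Unset Printing Implicit Defensive.
Import Order.TTheory GRing.Theory Num.Theory.

Definition n_asc (w : seq nat) : nat :=
  count (fun p : nat * nat => p.1 < p.2) (zip w (behead w)).
Definition n_desc (w : seq nat) : nat :=
  count (fun p : nat * nat => p.2 < p.1) (zip w (behead w)).

Definition height (w : seq nat) : int := (n_asc w)%:Z - (n_desc w)%:Z.

Definition ballot (w : seq nat) : Prop :=
  forall k : nat, (0 <= height (take k w))%R.

Definition inB (w : seq nat) : Prop :=
  uniq w /\ all (fun x => 0 < x) w /\ ballot w.

Definition ballot_perm (n : nat) (p : seq nat) : Prop :=
  perm_eq p (iota 1 n) /\ ballot p.

Definition inX (n : nat) (om p : seq nat) : Prop :=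
  ballot_perm n p /\
  exists a g d : seq nat, p = a ++ om ++ g ++ d /\ height (a ++ om ++ g) = height om.

(* the three defining properties of an omega-decomposition, without maximality;
   last 0 om is om_{-1} (om is nonempty in all uses) *)
Definition decomp_cond (om p a g d : seq nat) : Prop :=
  p = a ++ om ++ g ++ d /\ height (a ++ om ++ g) = height om /\
  inB (rev g ++ [:: last 0 om]).

Definition is_decomp (om p a g d : seq nat) : Prop :=
  decomp_cond om p a g d /\
  forall a' g' d', decomp_cond om p a' g' d' -> size g' <= size g.

(* Main.v *)
Require Import Defs.
From mathcomp Require Import all_boot all_order all_algebra zify.
From Stdlib Require Import Classical ClassicalEpsilon.
Set Implicit Arguments. Unset Strict Implicit. Unset Printing Implicit Defensive.
Import Order.TTheory GRing.Theory Num.Theory.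
Local Open Scope ring_scope.

Ltac clia := repeat match goal with H : ?T |- _ =>
  (match type of T with Prop => clear H end) end; lia.

Definition lk (x y : nat) : int := (x < y)%N%:Z - (y < x)%N%:Z.
Definition L (u v : seq nat) : int :=
  if (u == [::]) || (v == [::]) then 0 else lk (last 0%N u) (head 0%N v).

Lemma lk_anti x y : lk y x = - lk x y.
Proof. rewrite /lk; lia. Qed.

Lemma lk_bound x y : -1 <= lk x y <= 1.
Proof. rewrite /lk; case: (x < y)%N; case: (y < x)%N => /=; lia. Qed.

Lemma lk_neq x y : x != y -> lk x y = 1 \/ lk x y = -1.
Proof. rewrite /lk => H. case: (ltngtP x y) H => //= _ _; [left|right]; lia. Qed.

Lemma L_bound u v : -1 <= L u v <= 1.
Proof. rewrite /L; case: ifP => _; [lia|exact: lk_bound]. Qed.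

Lemma height_nil : height [::] = 0.
Proof. by []. Qed.

Lemma height_cons x v : height (x :: v) = L [:: x] v + height v.
Proof.
case: v => [|y v]; first by [].
rewrite /L /= /height /n_asc /n_desc /= /lk.
set a := count _ _; set b := count _ _; rewrite !PoszD; lia.
Qed.

Lemma height_cat u v : height (u ++ v) = height u + L u v + height v.
Proof.
elim: u => [|x u IH]; first by rewrite /L /= add0r.
rewrite cat_cons height_cons IH height_cons.
case: u IH => [|y u] IH.
  rewrite /= /L /=; case: v {IH} => //= *; lia.
have -> : L [:: x] ((y :: u) ++ v) = L [:: x] (y :: u) by [].
have -> : L (x :: y :: u) v = L (y :: u) v by [].
lia.
Qed.

Lemma L_rev u v : L (rev v) (rev u) = - L u v.
Proof.
rewrite /L -!size_eq0 !size_rev.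
case: u => [|x u]; first by rewrite /= orbT oppr0.
case: v => [|y v]; first by rewrite /= oppr0.
rewrite /= -lk_anti.
congr lk.
  by rewrite rev_cons last_rcons.
by rewrite lastI rev_rcons.
Qed.

Lemma height_rev u : height (rev u) = - height u.
Proof.
elim: u => [|x u IH]; first by rewrite oppr0.
rewrite rev_cons -cats1 height_cat IH (height_cons x u).
have -> : height [:: x] = 0 by [].
have -> : L (rev u) [:: x] = - L [:: x] u by rewrite -L_rev.
lia.
Qed.

Lemma height_le1 u : (size u <= 1)%N -> height u = 0.
Proof. by case: u => [|x [|y u]]. Qed.

Lemma L_catr u v w : v != [::] -> L u (v ++ w) = L u v.
Proof. by case: v => // x v _; rewrite /L /= !orbF. Qed.

Lemma L_catl u v w : v != [::] -> L (u ++ v) w = L v w.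
Proof.
case: v => // x v _; rewrite /L /= -!size_eq0 size_cat /= addnS /= last_cat.
by case: u => //= y u; case: ifP.
Qed.

Lemma L_take u v k : (0 < k)%N -> L u (take k v) = L u v.
Proof. by case: k => // k _; case: v => //=. Qed.

Lemma L_nil_r u : L u [::] = 0.
Proof. by rewrite /L orbT. Qed.
Lemma L_nil_l u : L [::] u = 0.
Proof. by []. Qed.

Lemma ballot_pre w u v : ballot w -> w = u ++ v -> 0 <= height u.
Proof. by move=> Hb E; have := Hb (size u); rewrite E take_size_cat. Qed.

Lemma ballotI w : (forall u v, w = u ++ v -> 0 <= height u) -> ballot w.
Proof. by move=> H k; apply: (H _ (drop k w)); rewrite cat_take_drop. Qed.

Lemma ballot_prefix u v : ballot (u ++ v) -> ballot u.
Proof.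
move=> Hb; apply: ballotI => u1 u2 E.
by apply: (ballot_pre Hb); rewrite E -catA.
Qed.

Lemma ballot_catI u v : ballot u -> (forall k, 0 <= height (u ++ take k v)) ->
  ballot (u ++ v).
Proof.
move=> Hu Hv k; rewrite take_cat; case: ifP => _; first exact: Hu.
exact: Hv.
Qed.

Lemma ballot_revE s : ballot (rev s) <-> forall t, height (drop t s) <= 0.
Proof.
split.
  move=> Hb t; have := Hb (size s - t)%N.
  rewrite take_rev height_rev.
  have -> : (size s - (size s - t))%N = minn t (size s) by rewrite minnC minnE.
  case: (leqP t (size s)) => Ht; rewrite ?minnE; first by rewrite oppr_ge0.
  by rewrite (drop_oversize (ltnW Ht)) height_nil.
move=> H k; rewrite take_rev height_rev oppr_ge0; exact: H.
Qed.

Lemma last_rev0 s : last 0%N (rev s) = head 0%N s.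
Proof. by case: s => // x s; rewrite rev_cons last_rcons. Qed.

Lemma head_rev0 s : head 0%N (rev s) = last 0%N s.
Proof. by case: s => // x s; rewrite lastI rev_rcons /= ?last_rcons. Qed.

Lemma L_headeq u v w : v != [::] -> w != [::] ->
  (u != [::] -> lk (last 0%N u) (head 0%N v) = lk (last 0%N u) (head 0%N w)) ->
  L u v = L u w.
Proof.
rewrite /L => /negbTE -> /negbTE ->; rewrite !orbF.
by case: u => //= x u H; apply: H.
Qed.

Lemma L_lasteq u v w : u != [::] -> v != [::] ->
  (w != [::] -> lk (last 0%N u) (head 0%N w) = lk (last 0%N v) (head 0%N w)) ->
  L u w = L v w.
Proof.
rewrite /L => /negbTE -> /negbTE ->; rewrite /=.
by case: w => //= x w H; apply: H.
Qed.

Lemma last_nz (x : nat) s : s != [::] -> last x s = last 0%N s.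
Proof. by case: s. Qed.

Lemma L_last a om e : om != [::] -> L (a ++ om) e = L [:: last 0%N om] e.
Proof.
move=> Hom; apply: L_lasteq => //; first by case: a; case: om Hom.
by move=> _; rewrite last_cat /= last_nz.
Qed.

Lemma uniq_L u v : uniq (u ++ v) -> u != [::] -> v != [::] ->
  L u v = 1 \/ L u v = -1.
Proof.
move=> Hu Hu0 Hv0; rewrite /L (negbTE Hu0) (negbTE Hv0) /=.
apply: lk_neq; apply/eqP => E.
move: Hu; rewrite cat_uniq => /and3P [_ /hasPn H _].
case: v Hv0 H E => // y v _ H E.
have := H y; rewrite /= inE eqxx => /(_ isT); rewrite /= in E; rewrite -E.
by case: u Hu0 {E H} => // x u _; rewrite /= mem_last.
Qed.

Lemma height_take1 u v : height (u ++ take 1 v) = height u + L u v.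
Proof.
case: v => [|x v]; first by rewrite cats0 L_nil_r addr0.
rewrite height_cat (L_take _ _ (isT : (0 < 1)%N)) [height (take 1 _)]height_le1 ?addr0 //. by rewrite size_take_min geq_minl.
Qed.

Lemma uniq_mid (s1 s2 s3 : seq nat) : uniq (s1 ++ s2 ++ s3) -> uniq s2.
Proof. by rewrite !cat_uniq => /and3P [_ _ /and3P []]. Qed.

Lemma uniq_dis (u v : seq nat) x : uniq (u ++ v) -> x \in u -> x \notin v.
Proof.
rewrite cat_uniq => /and3P [_ /hasPn H _] xu; apply/negP => xv.
by have := H x xv; rewrite /= xu.
Qed.

Lemma uniq_dis2 (u v : seq nat) x : uniq (u ++ v) -> x \in v -> x \notin u.
Proof. by rewrite uniq_catC; apply: uniq_dis. Qed.

Lemma index_pos (a s : seq nat) x : x \notin a -> index x (a ++ x :: s) = size a.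
Proof. by move=> H; rewrite index_cat (negbTE H) /= eqxx addn0. Qed.

Lemma pos_unique (a om r a' r' : seq nat) : uniq (a ++ om ++ r) -> om != [::] ->
  a ++ om ++ r = a' ++ om ++ r' -> a = a' /\ r = r'.
Proof.
case: om => // x om Hu _ E.
have Ha : x \notin a by apply: (uniq_dis2 Hu); rewrite mem_head.
have Hu' := Hu; rewrite E in Hu'.
have Ha' : x \notin a' by apply: (uniq_dis2 Hu'); rewrite mem_head.
have Hs : size a = size a'.
  by rewrite -(index_pos (om ++ r) Ha) -(index_pos (om ++ r') Ha') -!cat_cons E.
move/eqP: E; rewrite eqseq_cat // => /andP [/eqP -> /eqP E]; split => //.
by move: E => [] /eqP; rewrite eqseq_cat // => /andP [_ /eqP].
Qed.

Lemma ex_max_cl (P : nat -> Prop) B : (exists k, P k) -> (forall k, P k -> (k <= B)%N) ->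
  exists m, P m /\ forall k, P k -> (k <= m)%N.
Proof.
elim: B => [|B IH] [k0 Pk0] Hb.
  exists 0%N; split; last by move=> k /Hb.
  by have := Hb _ Pk0; rewrite leqn0 => /eqP <-.
case: (classic (P B.+1)) => HB.
  by exists B.+1; split.
apply: IH; first by exists k0.
move=> k Pk; have := Hb _ Pk; rewrite leq_eqVlt ltnS => /orP [/eqP E|//].
by rewrite E in Pk.
Qed.

Lemma uniq_lastcons (a om s r : seq nat) : uniq (a ++ om ++ s ++ r) -> om != [::] ->
  uniq (last 0%N om :: s).
Proof.
move=> Hu Hom; have Hu2 := uniq_mid Hu.
have : uniq (om ++ s ++ r) by move: Hu; rewrite cat_uniq => /and3P [].
move=> Hu3; rewrite /= (uniq_mid (s1 := om) (s3 := r)) // andbT.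
have : last 0%N om \notin s ++ r by apply: (uniq_dis Hu3); case: om Hom {Hu Hu2 Hu3} => //= x om _; rewrite mem_last.
by rewrite mem_cat negb_or => /andP [].
Qed.

Lemma mem_last0 (s : seq nat) : s != [::] -> last 0%N s \in s.
Proof. by case: s => //= x s _; rewrite mem_last. Qed.

Definition posall (w : seq nat) := all (fun x => 0 < x)%N w.

Lemma posall_sub (w p : seq nat) : posall p -> {subset w <= p} -> posall w.
Proof. by move=> /allP H S; apply/allP => x /S /H. Qed.

Definition mapdec (om om2 p : seq nat) : seq nat :=
  epsilon (inhabits [::]) (fun s => exists a g d, is_decomp om p a g d /\ s = rev g ++ om2 ++ rev a ++ d).

Lemma dec_unique0 om p a g d a' g' d' : om != [::] -> uniq p ->
  is_decomp om p a g d -> is_decomp om p a' g' d' -> a = a' /\ g = g' /\ d = d'.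
Proof.
move=> Hom Hu [[E1 Hc1] M1] [[E2 Hc2] M2].
have Hu' : uniq (a ++ om ++ (g ++ d)) by rewrite -E1.
have [Ea Er] := pos_unique Hu' Hom (etrans (esym E1) E2).
have Hs : size g = size g'.
  by apply/eqP; rewrite eqn_leq (M1 a' g' d') ?(M2 a g d) //; split.
move/eqP: Er; rewrite eqseq_cat // => /andP [/eqP -> /eqP ->]; by [].
Qed.

Lemma mapdec_spec om om2 p a g d : om != [::] -> uniq p -> is_decomp om p a g d ->
  mapdec om om2 p = rev g ++ om2 ++ rev a ++ d.
Proof.
move=> Hom Hu HD.
have Hex : exists s, exists a g d, is_decomp om p a g d /\ s = rev g ++ om2 ++ rev a ++ d.
  by exists (rev g ++ om2 ++ rev a ++ d), a, g, d.
rewrite /mapdec; have [a0 [g0 [d0 [HD0 ->]]]] := epsilon_spec (inhabits [::]) _ Hex.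
by have [-> [-> ->]] := dec_unique0 Hom Hu HD0 HD.
Qed.

Lemma inX_props n w p : inX n w p -> uniq p /\ posall p /\ ballot p.
Proof.
move=> [[Hperm_p Hb] _]; split; first by rewrite (perm_uniq Hperm_p) iota_uniq.
split => //.
by apply/allP => x; rewrite (perm_mem Hperm_p) mem_iota => /andP [].
Qed.

Section Main.
Variables (om om2 : seq nat).
Hypothesis Hom : om != [::].
Hypothesis Hom2 : om2 != [::].
Hypothesis Hperm : perm_eq om om2.
Hypothesis Hh1 : height om = 1.
Hypothesis Hh2 : height om2 = 1.
Hypothesis Hb2 : ballot om2.
Hypothesis C1 : forall z, z \notin om -> lk z (head 0%N om2) = lk z (last 0%N om).
Hypothesis C2 : forall z, z \notin om -> lk z (last 0%N om2) = lk z (head 0%N om).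

Lemma key_d p a g d : uniq p -> ballot p -> posall p -> is_decomp om p a g d ->
  forall k, 0 <= height (take k d).
Proof.
move=> Hu Hb Hp [[Ep [Eh HB]] Hmax] k.
have [//|Hk] := leP 0 (height (take k d)).
case: (ex_minnP (ex_intro (fun k => height (take k d) < 0) k Hk)) => m Hm Hmin.
have Hlt : forall t, (t < m)%N -> 0 <= height (take t d).
  by move=> t Ht; rewrite leNgt; apply/negP => /Hmin; rewrite leqNgt Ht.
have Hmd : (m <= size d)%N.
  rewrite leqNgt; apply/negP => Hsm.
  have := Hlt _ Hsm; rewrite take_size -(take_oversize (ltnW Hsm)).
  by rewrite leNgt Hm.
case: m Hm Hmin Hlt Hmd => [|m'] Hm Hmin Hlt Hmd; first by rewrite take0 in Hm.
set e := take m'.+1 d.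
have He1 : height e = -1.
  have := Hlt _ (ltnSn m'); move: Hm; rewrite /e -addn1 takeD height_take1.
  have := L_bound (take m' d) (drop m' d); clia.
have Ep2 : p = (a ++ om ++ g) ++ e ++ drop m'.+1 d by rewrite Ep cat_take_drop !catA.
have Hen : e != [::].
  by rewrite -size_eq0 /e size_take_min (minn_idPl Hmd).
have Ep2c : p = a ++ om ++ (g ++ e) ++ drop m'.+1 d by rewrite Ep2 !catA.
have HPn : a ++ om ++ g != [::] by move: Hom; rewrite -!size_eq0 !size_cat; clia.
have HPe : uniq ((a ++ om ++ g) ++ e).
  by move: Hu; rewrite Ep2 catA cat_uniq => /and3P [].
have HPh : height (a ++ om ++ g) = 1 by rewrite Eh Hh1.
case: (uniq_L HPe HPn Hen) => HL.
  have Hse : size e = m'.+1 by rewrite /e size_take_min (minn_idPl Hmd).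
  suff /Hmax : decomp_cond om p a (g ++ e) (drop m'.+1 d) by rewrite size_cat Hse; clia.
  split; first by rewrite Ep2 !catA.
  split. have -> : a ++ om ++ g ++ e = (a ++ om ++ g) ++ e by rewrite !catA. by rewrite height_cat HPh HL He1 Hh1.
  have HuB : uniq (last 0%N om :: g ++ e).
    by apply: (uniq_lastcons (a := a) (r := drop m'.+1 d)) => //; rewrite -Ep2c.
  rewrite cats1 -rev_cons; split; first by rewrite rev_uniq.
  split.
    apply: (posall_sub Hp) => x; rewrite mem_rev Ep2 inE => /orP [/eqP ->|].
      rewrite !mem_cat; apply/orP; left; apply/orP; right; apply/orP; left.
      exact: mem_last0.
    by rewrite !mem_cat => /orP [H|H]; rewrite ?H ?orbT.
  apply/ballot_revE => t.
  move: HB => [_ [_]]; rewrite cats1 -rev_cons => /ballot_revE HB.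
  rewrite -cat_cons drop_cat; case: ifP => Ht.
    have := HB t; have := L_bound (drop t (last 0%N om :: g)) e.
    rewrite height_cat He1; clia.
  set t' := (t - _)%N.
  case: (leqP m'.+1 t') => Ht'.
    by rewrite drop_oversize // Hse.
  have := Hlt _ Ht'; have := L_bound (take t' e) (drop t' e).
  move: He1; rewrite -{1}(cat_take_drop t' e) height_cat /e take_takel ?(ltnW Ht') //.
  clia.
have := ballot_pre (v := drop m'.+1 d) Hb (etrans Ep2 (catA _ _ _)).
rewrite height_cat HPh HL He1; clia.
Qed.
Lemma inB_last p a r rest : posall p -> uniq (a ++ om ++ r ++ rest) -> {subset r <= p} ->
  last 0%N om \in p -> 
  (forall t, height (drop t (last 0%N om :: r)) <= 0) ->
  inB (rev r ++ [:: last 0%N om]).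
Proof.
move=> Hp Hu Hs Hy Hd; rewrite cats1 -rev_cons; split.
  by rewrite rev_uniq; apply: (uniq_lastcons Hu).
split; last exact/ballot_revE.
apply: (posall_sub Hp) => x; rewrite mem_rev inE => /orP [/eqP ->|/Hs] //.
Qed.

Lemma dec_cond_exists p a g d : uniq p -> ballot p -> posall p ->
  p = a ++ om ++ g ++ d -> height (a ++ om ++ g) = height om ->
  exists a' g' d', decomp_cond om p a' g' d'.
Proof.
move=> Hu Hb Hp Ep Eh.
have Hy : last 0%N om \in p by rewrite Ep !mem_cat mem_last0 ?orbT.
have HQ : height (a ++ om) = height (a ++ take 1 om) + 1.
  by rewrite height_cat height_take1 Hh1.
have HQ1 : 1 <= height (a ++ om).
  rewrite HQ; have := ballot_pre (v := drop 1 om ++ g ++ d) Hb.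
  have E1 : p = (a ++ take 1 om) ++ drop 1 om ++ g ++ d.
    by rewrite Ep -{1}(cat_take_drop 1 om) !catA.
  move=> /(_ _ E1); clia.
case: (leP (height (a ++ om)) 1) => HQl.
  exists a, [::], (g ++ d); split; first by rewrite Ep.
  split; first by rewrite cats0 Hh1; move: HQl HQ1; clia.
  split => //; split; first by rewrite /= /posall /=; move/allP: Hp => /(_ _ Hy) ->.
  by move=> k; rewrite height_le1 // size_take_min; apply: leq_trans (geq_minr _ _) _.
set Q := a ++ om; set r := g ++ d.
have Hsg : ((0 < size g)%N /\ height (Q ++ take (size g) r) <= 1).
  rewrite /r take_size_cat // /Q -catA Eh Hh1; split => //.
  by case: g Eh {Ep r} => [|x g] //=; rewrite cats0 Hh1 => E; move: HQl; rewrite E; clia.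
have Hex : exists k, (0 < k)%N && (height (Q ++ take k r) <= 1).
  by exists (size g); apply/andP.
case: (ex_minnP Hex) => m /andP [Hm0 Hm] Hmin.
have Hlt : forall t, (t < m)%N -> 2 <= height (Q ++ take t r).
  move=> [|t] Ht; first by rewrite take0 cats0 /Q; move: HQl; clia.
  rewrite leNgt; apply/negP => H.
  have H1 : height (Q ++ take t.+1 r) <= 1 by move: H; clia.
  have := Hmin t.+1; rewrite H1 /= => /(_ isT); rewrite leqNgt Ht.
  by [].
case: m Hm0 Hm Hmin Hlt => // m' _ Hm Hmin Hlt.
set e := take m'.+1 r.
have He : height (Q ++ e) = 1.
  have := Hlt _ (ltnSn m'); move: Hm; rewrite /e -addn1 takeD catA height_take1.
  have := L_bound (Q ++ take m' r) (drop m' r); clia.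
exists a, e, (drop m'.+1 r); split.
  by rewrite Ep -/r -{1}(cat_take_drop m'.+1 r).
split; first by rewrite catA He Hh1.
have Ep3 : p = a ++ om ++ e ++ (drop m'.+1 r).
  by rewrite Ep -/r -{1}(cat_take_drop m'.+1 r).
apply: (inB_last (a := a) (rest := drop m'.+1 r) Hp).
- by rewrite -Ep3.
- by move=> x xe; rewrite Ep3 !mem_cat xe !orbT.
- by [].
move=> [|t].
  rewrite drop0; move: He; rewrite height_cat L_last // => He.
  rewrite -cat1s height_cat; have := L_bound [:: last 0%N om] e.
  have -> : height [:: last 0%N om] = 0 by [].
  move: He HQl; rewrite /Q; clia.
rewrite /= -/e.
case: (leqP (size e) t) => Ht; first by rewrite drop_oversize.
have Htm : (t <= m'.+1)%N.
  by apply: leq_trans (ltnW Ht) _; rewrite size_take_min geq_minl.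
have Hte : (t < m'.+1)%N by apply: leq_trans Ht _; rewrite size_take_min geq_minl.
have := Hlt t Hte.
have := L_bound (Q ++ take t e) (drop t e).
move: He; rewrite -{1}(cat_take_drop t e) catA height_cat /e take_takel //.
clia.
Qed.

Lemma dec_exists p a g d : uniq p -> ballot p -> posall p ->
  p = a ++ om ++ g ++ d -> height (a ++ om ++ g) = height om ->
  exists a' g' d', is_decomp om p a' g' d'.
Proof.
move=> Hu Hb Hp Ep Eh.
set P := (fun k => exists a g d, decomp_cond om p a g d /\ size g = k).
have H1 : exists k, P k.
  have [a1 [g1 [d1 Hc]]] := dec_cond_exists Hu Hb Hp Ep Eh.
  by exists (size g1), a1, g1, d1.
have H2 : forall k, P k -> (k <= size p)%N.
  move=> k [a1 [g1 [d1 [[E1 _] <-]]]]; rewrite E1 !size_cat; apply: leq_trans (leq_addr (size d1) _) _; apply: leq_trans (leq_addl (size om) _) _; exact: leq_addl.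
have [m [[a1 [g1 [d1 [Hc Hs]]]] Hmax]] := ex_max_cl H1 H2.
exists a1, g1, d1; split => // a' g' d' Hc'.
by rewrite Hs; apply: Hmax; exists a', g', d'.
Qed.

Lemma dec_unique p a g d a' g' d' : uniq p ->
  is_decomp om p a g d -> is_decomp om p a' g' d' -> a = a' /\ g = g' /\ d = d'.
Proof.
move=> Hu [[E1 Hc1] M1] [[E2 Hc2] M2].
have Hu' : uniq (a ++ om ++ (g ++ d)) by rewrite -E1.
have [Ea Er] := pos_unique Hu' Hom (etrans (esym E1) E2).
have Hs : size g = size g'.
  by apply/eqP; rewrite eqn_leq (M1 a' g' d') ?(M2 a g d) //; split.
move/eqP: Er; rewrite eqseq_cat // => /andP [/eqP -> /eqP ->]; by [].
Qed.

Lemma nil_rev (s : seq nat) : (rev s != [::]) = (s != [::]).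
Proof. by rewrite -!size_eq0 size_rev. Qed.

Lemma part1 n p a g d : inX n om p -> is_decomp om p a g d ->
  inX n om2 (rev g ++ om2 ++ rev a ++ d) /\
  is_decomp om2 (rev g ++ om2 ++ rev a ++ d) (rev g) (rev a) d.
Proof.
move=> [[Hperm_p Hb] _] Hdec.
have Hu : uniq p by rewrite (perm_uniq Hperm_p) iota_uniq.
have Hp : posall p.
  by apply/allP => x; rewrite (perm_mem Hperm_p) mem_iota => /andP [].
move: (Hdec) => [[Ep [Eh HB]] Hmax].
have Hd := key_d Hu Hb Hp Hdec.
set S := rev g ++ om2 ++ rev a.
have Hu2 : uniq ((a ++ om) ++ (g ++ d)) by rewrite -catA -Ep.
have Hg_nin : g != [::] -> head 0%N g \notin om.
  case: g {Ep Eh HB Hmax Hd S Hdec} Hu2 => // x g Hu2 _.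
  have := uniq_dis2 Hu2 (mem_head x _); rewrite mem_cat negb_or => /andP [].
  by [].
have Ha_nin : a != [::] -> last 0%N a \notin om.
  move=> Ha; have Hu3 : uniq (a ++ (om ++ g ++ d)) by rewrite -Ep.
  have := uniq_dis Hu3 (mem_last0 Ha); rewrite mem_cat negb_or => /andP [].
  by [].
have HL1 : L (rev g) om2 = L (rev g) [:: last 0%N om].
  apply: L_headeq => //; rewrite nil_rev => Hg; rewrite last_rev0 /=.
  exact: C1 (Hg_nin Hg).
have HL1' : L (rev g) (rev om) = L (rev g) [:: last 0%N om].
  by apply: L_headeq; rewrite ?nil_rev // head_rev0.
have HL2 : L om2 (rev a) = L (rev om) (rev a).
  apply: L_lasteq; rewrite ?nil_rev // => Ha.
  by rewrite head_rev0 last_rev0 lk_anti C2 ?Ha_nin // -lk_anti.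
have HS : height S = 1.
  rewrite /S height_cat L_catr // height_cat !height_rev HL1 -HL1' HL2 !L_rev.
  move: Eh; rewrite height_cat L_catr // height_cat Hh1 Hh2; clia.
have HgB : ballot (rev g ++ [:: last 0%N om]) by case: HB => _ [].
have B1 : ballot (rev g) := ballot_prefix HgB.
have B1h : 0 <= height (rev g) by have := B1 (size (rev g)); rewrite take_size.
have B2 : ballot (rev g ++ om2).
  apply: ballot_catI => // -[|k]; first by rewrite take0 cats0.
  rewrite height_cat (L_take _ _ (ltn0Sn k)) HL1.
  have := Hb2 k.+1; have := HgB (size (rev g)).+1.
  rewrite take_oversize ?size_cat ?addn1 // height_cat.
  have -> : height [:: last 0%N om] = 0 by []. clia.
have B2h : 0 <= height (rev g ++ om2).
  by have := B2 (size (rev g ++ om2)); rewrite take_size.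
have B3 : ballot S.
  rewrite /S catA; apply: ballot_catI => // k.
  rewrite take_rev; set t := (size a - k)%N.
  have Ea : a = take t a ++ drop t a by rewrite cat_take_drop.
  case: (eqVneq (drop t a) [::]) => Hu0; first by rewrite Hu0 /= cats0.
  have := HS; rewrite /S catA {1}Ea rev_cat catA height_cat L_catl ?nil_rev //.
  rewrite L_rev height_rev.
  have := ballot_pre (u := take t a ++ take 1 (drop t a))
    (v := drop 1 (drop t a) ++ om ++ g ++ d) Hb.
  have Ep' : p = (take t a ++ take 1 (drop t a)) ++ drop 1 (drop t a) ++ om ++ g ++ d.
    by rewrite Ep {1}Ea -!catA; congr (_ ++ _); rewrite [RHS]catA (cat_take_drop 1).
  rewrite height_take1 => /(_ Ep'); clia.
have HSh : forall k, 0 <= height (S ++ take k d).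
  move=> k; rewrite height_cat HS; have := Hd k; have := L_bound S (take k d); clia.
have Es : rev g ++ om2 ++ rev a ++ d = S ++ d by rewrite /S !catA.
have Hperm_s : perm_eq (rev g ++ om2 ++ rev a ++ d) p.
  apply/permP => P; rewrite Ep !count_cat !count_rev -(permP Hperm); clia.
have Hus : uniq (rev g ++ om2 ++ rev a ++ d) by rewrite (perm_uniq Hperm_s).
split.
  split; first split.
  - exact: perm_trans Hperm_s Hperm_p.
  - by rewrite Es; apply: ballot_catI.
  by exists (rev g), (rev a), d; split => //; rewrite HS Hh2.
have Hzom : last 0%N om2 \in om by rewrite (perm_mem Hperm) mem_last0.
have Hua : uniq (a ++ (om ++ g ++ d)) by rewrite -Ep.
split; first split; first by [].
  split; first by rewrite HS Hh2.
  rewrite revK cats1; split.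
    rewrite rcons_uniq (uniq_dis2 Hua) ?mem_cat ?Hzom //.
    by move: Hua; rewrite cat_uniq => /andP [].
  split.
    apply: (posall_sub Hp) => x; rewrite mem_rcons inE Ep !mem_cat.
    by case/orP => [/eqP ->|->]; rewrite ?Hzom ?orbT.
  rewrite -cats1.
  have Ep1 : p = (a ++ take 1 om) ++ drop 1 om ++ g ++ d.
    by rewrite Ep -!catA (catA (take 1 om)) cat_take_drop.
  apply: ballot_catI; first by apply: (ballot_prefix (v := om ++ g ++ d)); rewrite -Ep.
  move=> [|k]; first by rewrite take0 cats0; apply: (ballot_pre Hb Ep).
  have -> : take k.+1 [:: last 0%N om2] = take 1 [:: last 0%N om2] by [].
  rewrite height_take1.
  have -> : L a [:: last 0%N om2] = L a om.
    apply: L_headeq => // Ha.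
    by rewrite /= C2 ?Ha_nin.
  by rewrite -height_take1; apply: (ballot_pre Hb Ep1).
move=> a' g' d' [E' [Eh' HB']].
have Hus' : uniq (rev g ++ om2 ++ (rev a ++ d)) by [].
have [Ea' Er] := pos_unique Hus' Hom2 E'.
rewrite leqNgt; apply/negP => Hlt.
rewrite size_rev in Hlt.
have [k Hk Eg'] : exists2 k, (0 < k <= size d)%N & g' = rev a ++ take k d.
  exists (size g' - size a)%N.
    have := congr1 size Er; rewrite !size_cat size_rev => Hs.
    apply/andP; split; first by rewrite subn_gt0.
    by rewrite leq_subLR Hs leq_addr.
  have := congr1 (take (size g')) (esym Er).
  rewrite take_size_cat // take_cat size_rev ltnNge (ltnW Hlt) /= => E.
  exact: E.
have Hen : take k d != [::].
  rewrite -size_eq0 size_take_min; move/andP: Hk => [Hk1 Hk2].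
  by rewrite (minn_idPl Hk2) -lt0n.
have Hhe : height (take k d) = 0.
  have := Hd k; move: HB' => [_ [_ HB']].
  rewrite Eg' rev_cat revK -catA in HB'.
  have := ballot_pre HB' erefl; rewrite height_rev.
  clia.
have HSe : height (S ++ take k d) = 1.
  by rewrite /S -catA -catA -Eg' Ea' Eh' Hh2.
have HuSe : uniq (S ++ take k d).
  have : uniq ((S ++ take k d) ++ drop k d) by rewrite -catA cat_take_drop -Es.
  by rewrite cat_uniq => /andP [].
have HSn : S != [::].
  by rewrite /S -!size_eq0 !size_cat; move: Hom2; rewrite -size_eq0; clia.
move: HSe; rewrite height_cat HS Hhe; case: (uniq_L HuSe HSn Hen) => ->; clia.
Qed.


Lemma mapdec_inv n p : inX n om p ->
  inX n om2 (mapdec om om2 p) /\ mapdec om2 om (mapdec om om2 p) = p.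
Proof.
move=> HX; have [Hu [Hp Hb]] := inX_props HX.
have [_ [a [g [d [Ep Eh]]]]] := HX.
have [a0 [g0 [d0 HD]]] := dec_exists Hu Hb Hp Ep Eh.
rewrite (mapdec_spec om2 Hom Hu HD).
have [HX2 HD2] := part1 HX HD.
split => //.
have [Hu2 _] := inX_props HX2.
rewrite (mapdec_spec om Hom2 Hu2 HD2) !revK.
by case: HD => [[-> _] _].
Qed.

End Main.

Lemma lk_lt x y : (x < y)%N -> lk x y = 1%R.
Proof. by rewrite /lk => H; rewrite H ltnNge ltnW. Qed.
Lemma lk_gt x y : (y < x)%N -> lk x y = (-1)%R.
Proof. by rewrite /lk => H; rewrite H ltnNge ltnW. Qed.

Lemma height4 x1 x2 x3 x4 : height [:: x1; x2; x3; x4] = (lk x1 x2 + lk x2 x3 + lk x3 x4)%R.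
Proof. by rewrite !height_cons /L /= height_nil !addr0 !addrA. Qed.

Local Close Scope ring_scope.
Unset Implicit Arguments.

Theorem theorem2p3 (n i j : nat) :
  0 < i -> i + 2 <= j -> j <= n - 1 ->
  let lam := [:: i; n; j - 1; j] in
  let mu := [:: j - 1; j; n; i] in
  (* the image lies in X_n(mu) with the stated mu-decomposition *)
  (forall p a g d, inX n lam p -> is_decomp lam p a g d ->
     inX n mu (rev g ++ mu ++ rev a ++ d) /\
     is_decomp mu (rev g ++ mu ++ rev a ++ d) (rev g) (rev a) d) /\
  (* the map pi |-> gamma' mu alpha' delta is a bijection X_n(lam) -> X_n(mu)
     whose inverse is sigma |-> gamma' lam alpha' delta *)
  (exists f h : seq nat -> seq nat,
     (forall p a g d, inX n lam p -> is_decomp lam p a g d ->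
        f p = rev g ++ mu ++ rev a ++ d) /\
     (forall s a g d, inX n mu s -> is_decomp mu s a g d ->
        h s = rev g ++ lam ++ rev a ++ d) /\
     (forall p, inX n lam p -> inX n mu (f p) /\ h (f p) = p) /\
     (forall s, inX n mu s -> inX n lam (h s) /\ f (h s) = s)).
Proof.
move=> Hi Hij Hjn lam mu.
have c1 : (i < n)%N by lia.
have c2 : (j - 1 < n)%N by lia.
have c3 : (j - 1 < j)%N by lia.
have c4 : (j < n)%N by lia.
have c5 : (i < j - 1)%N by lia.
have Hl0 : lam != [::] by [].
have Hm0 : mu != [::] by [].
have Hpm : perm_eq lam mu.
  by apply/permP => P; rewrite /lam /mu /=; lia.
have Hhl : height lam = 1%R.
  by rewrite height4 (lk_lt c1) (lk_gt c2) (lk_lt c3).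
have Hhm : height mu = 1%R.
  by rewrite height4 (lk_lt c3) (lk_lt c4) (lk_gt c1).
have Hbl : ballot lam.
  move=> [|[|[|[|k]]]] //=; rewrite ?height_cons /L /= ?height_nil ?(lk_lt c1) ?(lk_gt c2) ?(lk_lt c3) //.
have Hbm : ballot mu.
  move=> [|[|[|[|k]]]] //=; rewrite ?height_cons /L /= ?height_nil ?(lk_lt c3) ?(lk_lt c4) ?(lk_gt c1) //.
have Cj : forall z, z \notin lam -> lk z (j - 1) = lk z j.
  move=> z; rewrite !inE !negb_or => /and4P [_ _ /eqP H1 /eqP H2]. rewrite /lk.
  have -> : (z < j - 1)%N = (z < j)%N by apply/idP/idP => H; lia.
  have -> : (j - 1 < z)%N = (j < z)%N by apply/idP/idP => H; lia.
  by [].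
have Cj' : forall z, z \notin mu -> lk z j = lk z (j - 1).
  by move=> z Hz; rewrite Cj // (perm_mem Hpm).
have C1a : forall z, z \notin lam -> lk z (head 0%N mu) = lk z (last 0%N lam) by exact: Cj.
have C2a : forall z, z \notin lam -> lk z (last 0%N mu) = lk z (head 0%N lam) by [].
have C1b : forall z, z \notin mu -> lk z (head 0%N lam) = lk z (last 0%N mu) by [].
have C2b : forall z, z \notin mu -> lk z (last 0%N lam) = lk z (head 0%N mu) by exact: Cj'.
have Hpm' : perm_eq mu lam by rewrite perm_sym.
split.
  by move=> p a g d; apply: part1.
exists (mapdec lam mu), (mapdec mu lam).
split.
  by move=> p a g d HX HD; apply: mapdec_spec => //; case: (inX_props HX).
split.
  by move=> p a g d HX HD; apply: mapdec_spec => //; case: (inX_props HX).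
split.
  by move=> p; apply: mapdec_inv.
by move=> p; apply: mapdec_inv.
Qed.
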